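(* In the setting described in the context, assume A1$'$, A2 and A3. If there exists $k^\star\in\{1,\dots,K\}$ with $\inf_{\mathbf w\in\mathcal W^*}w_{k^\star}>\frac12$, then $\liminf_{n\to\infty}\Pr\big(Y\in\mathcal C_{\mathrm{comb}}(\mathbf X;\mathcal D_n)\big)\ge1-\alpha$.
   Context: Setting: fix $K\ge2$ and $\alpha\in(0,1)$. For each sample size $n$, on a common probability space there are a random data set $\mathcal D_n$ and a random test pair $(\mathbf X,Y)$ with $\mathbf X\in\mathcal X\subseteq\mathbb R^p$, $Y\in\mathbb R$. For each $k\in\{1,\dots,K\}$ there is a random prediction set $\mathcal C_k(\mathbf X;\mathcal D_n)\subseteq\mathbb R$, determined by $\mathcal D_n$ and $\mathbf X$, such that the events $\{Y\in\mathcal C_k(\mathbf X;\mathcal D_n)\}$ are measurable. Let $\Delta^{K-1}=\{\mathbf w\in[0,1]^K:w_k\ge0,\sum_k w_k=1\}$ and let $\widehat{\mathbf w}_n=(\widehat w_{n,1},\dots,\widehat w_{n,K})$ be a $\sigma(\mathcal D_n)$-measurable random vector in $\Delta^{K-1}$. Let $\mathcal W^*\subseteq\Delta^{K-1}$ be a nonempty closed convex set; $\|\cdot\|$ is the Euclidean norm. A1$'$: $\sup_{k\in\{1,\dots,K\}}\big|\Pr(Y\notin\mathcal C_k(\mathbf X;\mathcal D_n)\mid\mathcal D_n)-\alpha\big|\to0$ in probability as $n\to\infty$. A2: $\inf_{\mathbf w\in\mathcal W^*}\|\widehat{\mathbf w}_n-\mathbf w\|\to0$ in probability as $n\to\infty$.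 A3: $\mathcal C_{\mathrm{comb}}(\mathbf X;\mathcal D_n):=\{y\in\mathbb R:\sum_{k=1}^K\widehat w_{n,k}\mathbf 1\{y\in\mathcal C_k(\mathbf X;\mathcal D_n)\}>1/2\}$. *)

(* Defs.v *)
From HB Require Import structures.
From mathcomp Require Import all_boot all_order all_algebra.
From mathcomp Require Import all_classical all_reals all_analysis.
Set Implicit Arguments. Unset Strict Implicit. Unset Printing Implicit Defensive.
Import Order.TTheory GRing.Theory Num.Theory.
Import numFieldNormedType.Exports.
Local Open Scope classical_set_scope.
Local Open Scope ring_scope.

Section Defs.
Context {d : measure_display} {T : measurableType d} {R : realType}.

Definition eucl_norm (K : nat) (v : 'rV[R]_K) : R :=
  Num.sqrt (\sum_(i < K) v 0 i ^+ 2).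

Definition eucl_dist (K : nat) (v : 'rV[R]_K) (W : set 'rV[R]_K) : R :=
  inf [set eucl_norm (v - w) | w in W].

Definition simplex (K : nat) : set 'rV[R]_K :=
  [set v | (forall i, 0 <= v 0 i) /\ \sum_(i < K) v 0 i = 1].

Definition sigma_measurable {dD} {DT : measurableType dD}
  (D : T -> DT) (f : T -> R) : Prop :=
  forall B : set R, measurable B ->
    exists A : set DT, measurable A /\ f @^-1` B = D @^-1` A.

Definition is_cond_prob (P : probability T R) {dD} {DT : measurableType dD}
  (D : T -> DT) (E : set T) (g : T -> R) : Prop :=
  [/\ sigma_measurable D g,
      P.-integrable setT (EFin \o g) &
      forall A : set DT, measurable A ->
        (\int[P]_(t in D @^-1` A) (g t)%:E = P (E `&` D @^-1` A))%E].

Definition cvg_in_prob (P : probability T R) (Z : nat -> T -> R) (c : R) : Prop :=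
  forall eps : R, 0 < eps ->
    (fun n => P [set t | eps < `|Z n t - c|]) @ \oo --> 0%E.

Definition Ccomb (K : nat) (w : 'rV[R]_K) (C : 'I_K -> set R) : set R :=
  [set y | 1 / 2 < \sum_(k < K) w 0 k * (y \in C k)%:R].

End Defs.
Arguments simplex {R} K.

(* Main.v *)
Require Import Defs.
From HB Require Import structures.
From mathcomp Require Import all_boot all_order all_algebra.
From mathcomp Require Import all_classical all_reals all_analysis.
From mathcomp Require Import ring lra measurable_realfun.
Import Order.TTheory GRing.Theory Num.Theory.
Import numFieldNormedType.Exports.
Local Open Scope classical_set_scope.
Local Open Scope ring_scope.

Section Norm.
Variable R : realType.

Lemma lagrange (K : nat) (a b : 'I_K -> R) :
  \sum_i \sum_j (a i * b j - a j * b i) ^+ 2 =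
  2 * ((\sum_i a i ^+ 2) * (\sum_i b i ^+ 2) - (\sum_i a i * b i) ^+ 2).
Proof.
have E : forall i j, (a i * b j - a j * b i) ^+ 2 =
   a i ^+ 2 * b j ^+ 2 + a j ^+ 2 * b i ^+ 2 - 2 * ((a i * b i) * (a j * b j)).
  by move=> i j; ring.
under eq_bigr do under eq_bigr do rewrite E.
have S1 : \sum_i \sum_j a i ^+ 2 * b j ^+ 2 = (\sum_i a i ^+ 2) * (\sum_i b i ^+ 2).
  by rewrite mulr_suml; apply: eq_bigr => i _; rewrite mulr_sumr.
have S2 : \sum_i \sum_j a j ^+ 2 * b i ^+ 2 = (\sum_i a i ^+ 2) * (\sum_i b i ^+ 2).
  rewrite exchange_big /=; exact: S1.
have S3 : \sum_i \sum_j 2 * ((a i * b i) * (a j * b j)) = 2 * (\sum_i a i * b i) ^+ 2.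
  rewrite expr2 mulr_suml mulr_sumr; apply: eq_bigr => i _.
  by rewrite mulr_sumr mulr_sumr; apply: eq_bigr => j _; ring.
transitivity (\sum_i \sum_j a i ^+ 2 * b j ^+ 2 + \sum_i \sum_j a j ^+ 2 * b i ^+ 2
   - \sum_i \sum_j 2 * ((a i * b i) * (a j * b j))); last first.
  by rewrite S1 S2 S3; ring.
rewrite -big_split /= -sumrB; apply: eq_bigr => i _.
by rewrite -big_split /= -sumrB.
Qed.

Lemma cauchy_schwarz (K : nat) (a b : 'I_K -> R) :
  (\sum_i a i * b i) ^+ 2 <= (\sum_i a i ^+ 2) * (\sum_i b i ^+ 2).
Proof.
have : 0 <= \sum_i \sum_j (a i * b j - a j * b i) ^+ 2.
  by apply: sumr_ge0 => i _; apply: sumr_ge0 => j _; exact: sqr_ge0.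
rewrite lagrange pmulr_rge0 // subr_ge0 //.
Qed.

Lemma eucl_norm_ge0 (K : nat) (v : 'rV[R]_K) : 0 <= eucl_norm v.
Proof. exact: sqrtr_ge0. Qed.

Lemma eucl_triangle (K : nat) (u v : 'rV[R]_K) :
  eucl_norm (u + v) <= eucl_norm u + eucl_norm v.
Proof.
rewrite /eucl_norm.
set A := \sum_i u 0 i ^+ 2; set B := \sum_i v 0 i ^+ 2.
have A0 : 0 <= A by apply: sumr_ge0 => i _; exact: sqr_ge0.
have B0 : 0 <= B by apply: sumr_ge0 => i _; exact: sqr_ge0.
have -> : Num.sqrt A + Num.sqrt B = Num.sqrt ((Num.sqrt A + Num.sqrt B) ^+ 2).
  by rewrite sqrtr_sqr ger0_norm // addr_ge0 // sqrtr_ge0.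
rewrite ler_sqrt; last by rewrite sqr_ge0.
have E : \sum_i (u + v) 0 i ^+ 2 = A + B + 2 * \sum_i u 0 i * v 0 i.
  rewrite /A /B mulr_sumr -!big_split /=; apply: eq_bigr => i _.
  rewrite mxE; ring.
rewrite E sqrrD !sqr_sqrtr //.
suff H : \sum_i u 0 i * v 0 i <= Num.sqrt A * Num.sqrt B.
  rewrite -mulr_natl; lra.
apply: (le_trans (ler_norm _)).
rewrite -sqrtrM // -sqrtr_sqr ler_sqrt; last by rewrite mulr_ge0.
exact: cauchy_schwarz.
Qed.

Lemma coord_le_eucl (K : nat) (v : 'rV[R]_K) k : `|v 0 k| <= eucl_norm v.
Proof.
rewrite /eucl_norm -sqrtr_sqr ler_sqrt; last first.
  by apply: sumr_ge0 => i _; exact: sqr_ge0.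
rewrite (bigD1 k) //= lerDl.
by apply: sumr_ge0 => i _; exact: sqr_ge0.
Qed.

Lemma eucl_normN (K : nat) (v : 'rV[R]_K) : eucl_norm (- v) = eucl_norm v.
Proof. by rewrite /eucl_norm; congr Num.sqrt; apply: eq_bigr => i _; rewrite mxE sqrrN. Qed.


Lemma dist_le (K : nat) (W : set 'rV[R]_K) v w : W w ->
  eucl_dist v W <= eucl_norm (v - w).
Proof.
move=> Ww; rewrite /eucl_dist; apply: ge_inf; last by exists w.
by exists 0 => _ [w' _ <-]; exact: eucl_norm_ge0.
Qed.

Lemma dist_lip (K : nat) (W : set 'rV[R]_K) u v : W !=set0 ->
  eucl_dist u W <= eucl_dist v W + eucl_norm (u - v).
Proof.
move=> [w0 Ww0]; rewrite -lerBlDr; apply: lb_le_inf.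
  by exists (eucl_norm (v - w0)), w0.
move=> _ [w Ww <-]; rewrite lerBlDr.
apply: (le_trans (@dist_le _ _ u _ Ww)).
have -> : u - w = (v - w) + (u - v) by rewrite [RHS]addrC addrA subrK.
exact: eucl_triangle.
Qed.

Lemma dist_lt (K : nat) (W : set 'rV[R]_K) v e : W !=set0 ->
  eucl_dist v W < e -> exists2 w, W w & eucl_norm (v - w) < e.
Proof.
move=> [w0 Ww0] /inf_lt; case.
  by exists (eucl_norm (v - w0)), w0.
by move=> _ [w Ww <-] h; exists w.
Qed.
End Norm.
Section Meas.
Context d (T : measurableType d) (R : realType).

Lemma meas_gt (f : T -> R) a : measurable_fun setT f -> measurable [set t | a < f t].
Proof.
move=> mf; have := mf measurableT _ (measurable_itv `]a, +oo[).
by rewrite setTI preimage_itvoy.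
Qed.

Lemma meas_le (f : T -> R) a : measurable_fun setT f -> measurable [set t | f t <= a].
Proof.
move=> mf; rewrite (_ : [set t | f t <= a] = ~` [set t | a < f t]).
  exact/measurableC/meas_gt.
by apply/seteqP; split => t /=; rewrite leNgt => /negP.
Qed.

Lemma meas_ge (f : T -> R) a : measurable_fun setT f -> measurable [set t | a <= f t].
Proof.
move=> mf; rewrite (_ : [set t | a <= f t] = [set t | - f t <= - a]).
  by apply: meas_le; apply: measurableT_comp => //.
by apply/seteqP; split => t /=; rewrite lerN2.
Qed.

Lemma sigma_meas dD (DT : measurableType dD) (D : T -> DT) (f : T -> R) :
  measurable_fun setT D -> sigma_measurable D f -> measurable_fun setT f.
Proof.
move=> mD sf _ B mB; have [A [mA ->]] := sf B mB.
by have := mD measurableT A mA.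
Qed.

End Meas.

Section DistMeas.
Context d (T : measurableType d) (R : realType) (K : nat).

Definition qs (m : nat) : 'rV[R]_K :=
  if (unpickle m : option 'rV[rat]_K) is Some q then map_mx (fun r : rat => ratr r) q else 0.

Lemma qs_dense (v : 'rV[R]_K) (e : R) : (0 < K)%N -> 0 < e -> exists m, eucl_norm (v - qs m) < e.
Proof.
move=> Kp e0.
set eta := e / (K%:R + 1).
have eta0 : 0 < eta by rewrite divr_gt0 // ltr_wpDl.
have : forall i : 'I_K, exists r : rat, ratr r \in `]v 0 i - eta, v 0 i + eta[.
  by move=> i; apply: rat_in_itvoo; rewrite ltrD2l gtrN.
move=> /choice[f Hf].
exists (pickle (\row_i f i : 'rV[rat]_K)).
rewrite /qs pickleK /eucl_norm.
have S : \sum_i (v - map_mx (fun r : rat => ratr r) (\row_i f i)) 0 i ^+ 2 <= K%:R * eta ^+ 2.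
  have -> : K%:R * eta ^+ 2 = \sum_(i < K) eta ^+ 2 by rewrite sumr_const card_ord mulr_natl.
  apply: ler_sum => i _.
  rewrite !mxE; move: (Hf i); rewrite in_itv /= => /andP[h1 h2].
  rewrite -ler_sqrt ?sqr_ge0 // !sqrtr_sqr (ger0_norm (ltW eta0)).
  rewrite ler_norml; apply/andP; split; lra.
apply: (@le_lt_trans _ _ (Num.sqrt (K%:R * eta ^+ 2))).
  by rewrite ler_sqrt // mulr_ge0 // sqr_ge0.
rewrite -[X in _ < X](ger0_norm (ltW e0)) -sqrtr_sqr ltr_sqrt ?exprn_gt0 //.
rewrite /eta expr_div_n mulrA ltr_pdivrMr ?exprn_gt0 ?ltr_wpDl //.
have k0 : 0 <= K%:R :> R by [].
have e2 : 0 < e ^+ 2 by rewrite exprn_gt0.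
rewrite [K%:R * _]mulrC -subr_gt0 -mulrBr pmulr_rgt0 //.
rewrite subr_gt0; nra.
Qed.


Lemma norm_meas (F : T -> 'rV[R]_K) (q : 'rV[R]_K) :
  (forall k, measurable_fun setT (fun t => F t 0 k)) ->
  measurable_fun setT (fun t => eucl_norm (F t - q)).
Proof.
move=> mF; rewrite /eucl_norm.
apply: (measurableT_comp (continuous_measurable_fun (@sqrt_continuous R))).
apply: measurable_sum => i.
rewrite (_ : (fun t => _) = (fun t => (F t 0 i - q 0 i) * (F t 0 i - q 0 i))); last first.
  apply: boolp.funext => t. rewrite !mxE. by rewrite expr2.
by apply: measurable_funM; apply: measurable_funB => //.
Qed.

Lemma dist_meas (F : T -> 'rV[R]_K) (W : set 'rV[R]_K) : (0 < K)%N -> W !=set0 ->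
  (forall k, measurable_fun setT (fun t => F t 0 k)) ->
  measurable_fun setT (fun t => eucl_dist (F t) W).
Proof.
move=> Kp W0 mF.
apply: (measurability _ (RGenOInfty.measurableE R)) => //.
move=> /= _ [_ [a ->] <-]; rewrite setTI preimage_itvoy.
rewrite [X in measurable X](_ : _ = \bigcup_j \bigcap_m
   [set t | a + j.+1%:R^-1 <= eucl_dist (qs m) W + eucl_norm (F t - qs m)]).
  apply: bigcupT_measurable => j; apply: bigcapT_measurable => m.
  by apply: meas_ge; apply: measurable_funD => //; exact: norm_meas.
apply/seteqP; split => t /=.
  move=> /ltr_add_invr [j hj]; exists j => // m _ /=.
  apply: (le_trans (ltW hj)); exact: dist_lip.
move=> [j _ hj]; rewrite ltNge; apply/negP => hle.
have e0 : 0 < j.+1%:R^-1 / 2 :> R by rewrite divr_gt0 // invr_gt0.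
have [m hm] := @qs_dense (F t) _ Kp e0.
have h0 := hj m I; rewrite /= in h0.
have := @dist_lip _ _ W (qs m) (F t) W0; rewrite -opprB eucl_normN => h1.
have h2 := @eucl_norm_ge0 _ _ (F t - qs m).
move: hm h0 h1 h2 hle; set x := eucl_norm _; set c := j.+1%:R^-1; set y := eucl_dist (qs m) W; set z := eucl_dist (F t) W. lra.
Qed.
End DistMeas.
Section PerN.
Context d (T : measurableType d) (R : realType) (P : probability T R).

Lemma Pfin (A : set T) : measurable A -> P A = (fine (P A))%:E.
Proof. by move=> mA; rewrite fineK // fin_num_measure. Qed.

Lemma Ple (A B : set T) : measurable A -> measurable B -> A `<=` B ->
  fine (P A) <= fine (P B).
Proof.
move=> mA mB AB; rewrite -lee_fin -Pfin // -Pfin //.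
by apply: le_measure => //; rewrite inE.
Qed.

Lemma Pge0 (A : set T) : measurable A -> 0 <= fine (P A).
Proof. by move=> mA; rewrite -lee_fin -Pfin. Qed.

Lemma Ple1 (A : set T) : measurable A -> fine (P A) <= 1.
Proof. by move=> mA; rewrite -lee_fin -Pfin // probability_le1. Qed.

Lemma PDI (A B : set T) : measurable A -> measurable B ->
  fine (P A) = fine (P (A `\` B)) + fine (P (A `&` B)).
Proof.
move=> mA mB; apply: EFin_inj; rewrite EFinD -!Pfin //.
- exact: measureDI.
- exact: measurableI.
- exact: measurableD.
Qed.


Lemma perN dD (DT : measurableType dD) (Dn : T -> DT) (mD : measurable_fun setT Dn)
  (G : set T) (mG : measurable G) (gk : T -> R)
  (Hgk : is_cond_prob P Dn (~` G) gk)
  (Comb Sset Mset Uset : set T) (mC : measurable Comb) (mS : measurable Sset)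
  (mM : measurable Mset) (mU : measurable Uset)
  (hGS : G `&` ~` Sset `<=` Comb) (hSU : Sset `<=` Uset)
  (c : R) (c0 : 0 <= c) (hM : [set t | c < gk t] `<=` Mset) :
  1 - c <= fine (P Comb) + fine (P Mset) + fine (P Uset).
Proof.
case: Hgk => sm intg Hint.
have [A [mA hA]] := sm _ (measurable_itv `]c, +oo[).
have mS1 : measurable (Dn @^-1` A) by have := mD measurableT A mA; rewrite setTI.
have mS0 : measurable (Dn @^-1` (~` A)).
  by have := mD measurableT _ (measurableC mA); rewrite setTI.
have mE : measurable (~` G) by exact: measurableC.
have h1 : fine (P (~` G)) <= c + fine (P Mset).
  rewrite (@PDI _ _ mE mS1); apply: lerD.
    have -> : ~` G `\` Dn @^-1` A = ~` G `&` Dn @^-1` (~` A).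
      by rewrite preimage_setC.
    rewrite -lee_fin -Pfin; last exact: measurableI.
    rewrite -Hint //; last exact: measurableC.
    apply: (@le_trans _ _ (\int[P]_(t in Dn @^-1` (~` A)) (cst c%:E) t)%E).
      apply: le_integral.
      - exact: mS0.
      - by apply: (integrableS measurableT) => //.
      - exact: finite_measure_integrable_cst.
      move=> t; rewrite inE /= => hAt; rewrite lee_fin.
      rewrite leNgt; apply/negP => ct; apply: hAt.
      have : (gk @^-1` `]c, +oo[) t by rewrite /= in_itv /= ct.
      by rewrite hA.
    rewrite integral_cst // muleC; apply: gee_pMl => //; [by rewrite fin_num_measure | exact: probability_le1].
  apply: (@le_trans _ _ (fine (P (Dn @^-1` A)))).
    by apply: Ple => //; try exact: measurableI; try exact: subIsetr.
  apply: Ple => //; rewrite -hA => t /=; rewrite in_itv /= andbT; exact: hM.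
have h2 : fine (P G) <= fine (P Comb) + fine (P Uset).
  rewrite (@PDI _ _ mG mS); apply: lerD.
    by apply: Ple => //; try exact: measurableD; try exact: hGS.
  apply: (@le_trans _ _ (fine (P Sset))).
    by apply: Ple => //; try exact: measurableI; try exact: subIsetr.
  exact: Ple.
have h3 : fine (P G) + fine (P (~` G)) = 1.
  have := @PDI _ _ (@measurableT _ T) mG; rewrite setTD setTI.
  by rewrite probability_setT /= addrC => <-.
lra.
Qed.
End PerN.
Lemma liminf_ge (R : realType) (u : (\bar R)^nat) (l : \bar R) N :
  (forall n, (N <= n)%N -> (l <= u n)%E) -> (l <= limn_einf u)%E.
Proof.
move=> HN; rewrite limn_einf_lim (cvg_lim _ (@cvg_einfs_sup _ u)) //.
apply: (@le_trans _ _ (einfs u N)); last by apply: ereal_sup_ubound; exists N.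
by apply: le_ereal_inf_tmp => _ [k hk <-]; exact: HN.
Qed.

Lemma ev_lt (R : realType) (v : nat -> \bar R) (e : R) : 0 < e ->
  v @ \oo --> 0%E -> exists N, forall n, (N <= n)%N -> fine (v n) < e.
Proof.
move=> e0 /fine_cvgP [_ hc].
have := cvgr_lt _ hc _ e0.
move=> H; have [N _ HN] := H; exists N => n hn; exact: HN.
Qed.

Section Mx.
Context d (T : measurableType d) (R : realType).
Lemma meas_bigmax (I : Type) (s : seq I) (h : I -> T -> R) :
  (forall i, measurable_fun setT (h i)) ->
  measurable_fun setT (fun t => \big[Num.max/0]_(i <- s) h i t).
Proof.
move=> mh; elim: s => [|a s IH].
  have -> : (fun t => \big[Num.max/0]_(i <- [::]) h i t) = cst 0.
    by apply: boolp.funext => t; rewrite big_nil.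
  exact: measurable_cst.
have -> : (fun t => \big[Num.max/0]_(i <- a :: s) h i t) =
   (h a) \max (fun t => \big[Num.max/0]_(i <- s) h i t).
  by apply: boolp.funext => t; rewrite big_cons.
exact: measurable_maxr.
Qed.
End Mx.

Theorem theorem3
  (d : measure_display) (T : measurableType d) (R : realType)
  (P : probability T R)
  (K : nat) (HK : (2 <= K)%N) (alpha : R) (Ha0 : 0 < alpha) (Ha1 : alpha < 1)
  (p : nat)
  (dD : measure_display) (DT : nat -> measurableType dD)
  (D : forall n, T -> DT n) (HD : forall n, measurable_fun setT (D n))
  (X : T -> 'rV[R]_p) (Y : T -> R) (HY : measurable_fun setT Y)
  (C : forall n, 'I_K -> DT n -> 'rV[R]_p -> set R)
  (HCmeas : forall n k, measurable [set t | Y t \in C n k (D n t) (X t)])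
  (what : nat -> T -> 'rV[R]_K)
  (Hwmeas : forall n k, sigma_measurable (D n) (fun t => what n t 0 k))
  (Hwsimp : forall n t, simplex K (what n t))
  (Wstar : set 'rV[R]_K)
  (HW0 : Wstar !=set0) (HWc : closed Wstar) (HWconv : convex_set Wstar)
  (HWs : Wstar `<=` simplex K)
  (* A1' : for versions g n k of Pr(Y \notin C_k(X; D_n) | D_n) *)
  (g : nat -> 'I_K -> T -> R)
  (Hg : forall n k, is_cond_prob P (D n)
          [set t | Y t \notin C n k (D n t) (X t)] (g n k))
  (HA1 : cvg_in_prob P
          (fun n t => \big[Num.max/0]_(k < K) `|g n k t - alpha|) 0)
  (* A2 *)
  (HA2 : cvg_in_prob P (fun n t => eucl_dist (what n t) Wstar) 0)
  (kstar : 'I_K)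
  (Hk : 1 / 2 < inf [set w 0 kstar | w in Wstar]) :
  ((1 - alpha)%:E <=
    limn_einf (fun n => P [set t | Y t \in
       Ccomb (what n t) (fun k => C n k (D n t) (X t))]))%E.
Proof.
have K0 : (0 < K)%N by apply: leq_trans HK.
have mW n k : measurable_fun setT (fun t => what n t 0 k).
  exact: sigma_meas (HD n) (Hwmeas n k).
have mg n k : measurable_fun setT (g n k).
  by case: (Hg n k) => sm _ _; exact: sigma_meas (HD n) sm.
have mComb n : measurable [set t | Y t \in Ccomb (what n t) (fun k => C n k (D n t) (X t))].
  rewrite (_ : [set t | _] = [set t | 1/2 < \sum_(k < K) what n t 0 k *
       \1_[set t | Y t \in C n k (D n t) (X t)] t]).
    apply: meas_gt; apply: measurable_sum => k; apply: measurable_funM => //.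
  have E t : \sum_(k < K) what n t 0 k * (Y t \in C n k (D n t) (X t))%:R =
     \sum_(k < K) what n t 0 k * \1_[set t | Y t \in C n k (D n t) (X t)] t.
    apply: eq_bigr => k _; rewrite /indic.
    case: (boolP (Y t \in C n k (D n t) (X t))) => h; [by rewrite mem_set | by rewrite memNset //; apply/negP].
  by apply/seteqP; split => t /=; rewrite in_setE /Ccomb /= E.
set Comb := fun n => [set t | Y t \in Ccomb (what n t) (fun k => C n k (D n t) (X t))].
set Mset := fun n e => [set t | e < `|\big[Num.max/0]_(k < K) `|g n k t - alpha| - 0|].
set Uset := fun n e => [set t | e < `|eucl_dist (what n t) Wstar - 0|].
set Sset := fun n => [set t | what n t 0 kstar <= 1 / 2].
set Gs := fun n => [set t | Y t \in C n kstar (D n t) (X t)].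
have mM n e : measurable (Mset n e).
  apply: meas_gt; apply: measurableT_comp => //; apply: measurable_funB => //.
  by apply: meas_bigmax => k; apply: measurableT_comp => //; apply: measurable_funB.
have mU n e : measurable (Uset n e).
  apply: meas_gt; apply: measurableT_comp => //; apply: measurable_funB => //.
  exact: dist_meas.
have mS n : measurable (Sset n) by apply: meas_le.
set delta := inf [set w 0 kstar | w in Wstar] - 1 / 2.
have d0 : 0 < delta by rewrite subr_gt0.
have hSU n : Sset n `<=` Uset n (delta / 2).
  move=> t; rewrite /Sset /Uset /= => hS; rewrite ltNge; apply/negP => hd.
  have hd' : eucl_dist (what n t) Wstar < delta.
    apply: (le_lt_trans (le_trans (ler_norm _) _)); first by rewrite -[X in `|X|]subr0; exact: hd.
    by rewrite ltr_pdivrMr // ltr_pMr // ltr1n.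
  have [w Ww hw] := @dist_lt _ _ Wstar _ _ HW0 hd'.
  have hinf : inf [set w 0 kstar | w in Wstar] <= w 0 kstar.
    apply: ge_inf; last by exists w.
    by exists 0 => _ [w' Ww' <-]; have [h _] := HWs _ Ww'; exact: h.
  have := @coord_le_eucl _ _ (what n t - w) kstar; rewrite mxE [(- w) 0 kstar]mxE => hc.
  have := le_lt_trans hc hw; rewrite ltr_norml => /andP[h1 h2].
  rewrite /delta in h1 h2; lra.
have hGS n : Gs n `&` ~` Sset n `<=` Comb n.
  move=> t [/= hG hS]; rewrite /Comb /= in_setE /Ccomb /=.
  have hS' : 1 / 2 < what n t 0 kstar by rewrite ltNge; apply/negP.
  apply: (lt_le_trans hS'); rewrite (bigD1 kstar) //= hG mulr1 lerDl.
  apply: sumr_ge0 => k _; apply: mulr_ge0 => //.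
  by have [h _] := Hwsimp n t; exact: h.
have hM n e : [set t | alpha + e < g n kstar t] `<=` Mset n e.
  move=> t; rewrite /Mset /= => h; rewrite subr0; apply: (lt_le_trans _ (ler_norm _)).
  apply: (lt_le_trans _ (le_bigmax _ _ kstar)); rewrite /=.
  by rewrite ltr_normr; apply/orP; left; rewrite ltrBrDl.
have hE n : [set t | Y t \notin C n kstar (D n t) (X t)] = ~` Gs n.
  by apply/seteqP; split => t /=; [move/negP | move/negP].
have key n e : 0 < e -> 1 - (alpha + e) <=
    fine (P (Comb n)) + fine (P (Mset n e)) + fine (P (Uset n (delta / 2))).
  move=> e0.
  have Hgk : is_cond_prob P (D n) (~` Gs n) (g n kstar) by rewrite -hE.
  have ae : 0 <= alpha + e by rewrite addr_ge0 // ltW.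
  exact: (@perN _ _ _ P _ _ (D n) (HD n) (Gs n) (HCmeas n kstar) (g n kstar) Hgk
    (Comb n) (Sset n) (Mset n e) (Uset n (delta / 2)) (mComb n) (mS n) (mM n e)
    (mU n _) (hGS n) (hSU n) (alpha + e) ae (hM n e)).
apply/lee_addgt0Pr => e e0.
have e3 : 0 < e / 3 by rewrite divr_gt0.
have [N1 HN1] := @ev_lt _ _ _ e3 (HA1 _ e3).
have [N2 HN2] := @ev_lt _ _ _ e3 (HA2 _ (divr_gt0 d0 (ltr0n _ 2))).
rewrite -leeBlDr // -EFinB.
apply: (@liminf_ge _ _ _ (maxn N1 N2)) => n hn.
have h1 := HN1 n (leq_trans (leq_maxl _ _) hn).
have h2 := HN2 n (leq_trans (leq_maxr _ _) hn).
have h3 := key n _ e3.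
rewrite (@Pfin _ _ _ P _ (mComb n)) lee_fin.
move: h1 h2 h3; rewrite /Mset /Uset /Comb /=.
set a1 := fine _; set a2 := fine _; set a3 := fine _.
lra.
Qed.
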